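(* Let $m\geq 1$ and let $g=a_0+a_1z+\cdots+a_mz^m\in\mathbb{Z}[z]$ with $a_0\neq 0$ and $a_m\neq 0$. Suppose that for some index $j\in\{0,\ldots,m-1\}$, exactly $j$ zeros of $g$ (counted with multiplicity) lie in the open disk $\{z\in\mathbb{C}:|z|<1/|a_m|\}$ and the remaining $m-j$ zeros lie outside the closed disk $\{z\in\mathbb{C}:|z|\leq 1\}$. Then $g$ is a product of at most $m-j$ nonconstant irreducible polynomials in $\mathbb{Z}[z]$ (up to a constant factor); i.e., whenever $g=c\,g_1g_2\cdots g_r$ with $c\in\mathbb{Z}$ and each $g_i\in\mathbb{Z}[z]$ nonconstant and irreducible, one has $r\leq m-j$. *)

(* Defs.v *)
From HB Require Import structures.
From mathcomp Require Import all_boot all_order all_algebra all_field.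
Set Implicit Arguments. Unset Strict Implicit. Unset Printing Implicit Defensive.
Import Order.TTheory GRing.Theory Num.Theory.
Local Open Scope ring_scope.

Definition irreducible_intpoly (p : {poly int}) : Prop :=
  [/\ p != 0, p \isn't a GRing.unit &
      forall q r : {poly int}, p = q * r ->
        q \is a GRing.unit \/ r \is a GRing.unit].

(* Main.v *)
Require Import Defs.
From HB Require Import structures.
From mathcomp Require Import all_boot all_order all_algebra all_field.
From mathcomp Require Import zify.
Import Order.TTheory GRing.Theory Num.Theory.
Local Open Scope ring_scope.

Lemma count_roots (F : idomainType) (P : pred F) (qs : seq {poly F}) (rs : seq F) :
  (forall q, q \in qs -> exists2 z, root q z & P z) ->
  \prod_(q <- qs) q %| \prod_(r <- rs) ('X - r%:P) -> (size qs <= count P rs)%N.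
Proof.
elim: qs rs => [|q qs IH] rs Hq Hd //=.
have [z rz Pz] := Hq q (mem_head _ _).
have [q' Eq] := factor_theorem _ _ rz.
have zin : z \in rs.
  rewrite -root_prod_XsubC; apply: root_dvdp Hd _.
  by rewrite big_cons rootM rz.
have Hp := perm_to_rem zin.
rewrite (permP Hp) /= Pz add1n ltnS.
apply: IH.
  by move=> q0 q0in; apply: Hq; rewrite in_cons q0in orbT.
move: Hd; rewrite (perm_big _ Hp) !big_cons Eq.
rewrite -mulrA mulrC -mulrA dvdp_mul2l ?polyXsubC_eq0 //.
move=> H; apply: dvdp_trans H; idtac.
exact: dvdp_mulIl.
Qed.

Lemma factor_big (g h q : {poly int}) (rs : seq algC) :
  g = h * q -> g`_0 != 0 -> (1 < size h)%N ->
  map_poly (intr : int -> algC) g =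
    (lead_coef g)%:~R *: \prod_(r <- rs) ('X - r%:P) ->
  (forall r, r \in rs -> `|r| < `|(lead_coef g)%:~R : algC|^-1 \/ 1 < `|r|) ->
  exists2 z, root (map_poly (intr : int -> algC) h) z & 1 < `|z|.
Proof.
move=> Eg g0 sh EgC Hrs.
have gn0 : g != 0 by apply: contraNneq g0 => ->; rewrite coef0.
have an0 : lead_coef g != 0 by rewrite lead_coef_eq0.
have aCn0 : (lead_coef g)%:~R != 0 :> algC by rewrite intr_eq0.
set hC := map_poly (intr : int -> algC) h.
have [ss Ess] := closed_field_poly_normal hC.
have bE : lead_coef hC = (lead_coef h)%:~R by rewrite lead_coef_map_inj //; exact: intr_inj.
have hn0 : h != 0 by apply: contraNneq gn0 => H; rewrite Eg H mul0r.
have bn0 : lead_coef hC != 0 by rewrite bE intr_eq0 lead_coef_eq0.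
case: (boolP (has (fun s => 1 < `|s|) ss)) => [/hasP [z zin zb]|].
  exists z => //.
  by rewrite Ess rootZ // root_prod_XsubC.
move/hasPn => Hs.
have small : forall s, s \in ss -> `|s| < `|(lead_coef g)%:~R : algC|^-1.
  move=> s sin.
  have : s \in rs.
    rewrite -root_prod_XsubC -(rootZ _ _ aCn0) -EgC Eg rmorphM rootM.
    apply/orP; left.
    have rh : root hC s by rewrite Ess rootZ // root_prod_XsubC.
    exact: rh.
  move=> /Hrs [] // H; by have := Hs s sin; rewrite H.
have ble : `|lead_coef h| <= `|lead_coef g|.
  have qn0 : lead_coef q != 0 by apply: contraNneq an0; rewrite Eg lead_coefM => ->; rewrite mulr0.
  rewrite Eg lead_coefM normrM; apply: ler_peMr => //; by rewrite -gtz0_ge1 normr_gt0.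
have age1 : 1 <= `|lead_coef g| by rewrite -gtz0_ge1 normr_gt0.
have szs : (0 < size ss)%N.
  have : size hC = size h by rewrite size_map_inj_poly //; exact: intr_inj.
  rewrite Ess size_scale // size_prod_XsubC; lia.
case: ss Ess Hs small szs => // s0 ss Ess Hs small _.
have h00 : h`_0 = 0.
  have E0 : (h`_0)%:~R = hC.[0] :> algC by rewrite horner_coef0 coef_map.
  rewrite Ess hornerZ horner_prod big_cons in E0.
  have : `|h`_0| < 1.
    rewrite -(ltr_int algC) intr_norm E0 normrM normrM normr_prod bE -intr_norm.
    under eq_bigr do rewrite hornerXsubC sub0r normrN.
    rewrite big_seq.
    set P := \prod_(_ <- _ | _) _.
    have ainv1 : `|(lead_coef g)%:~R : algC|^-1 <= 1.
      by rewrite invf_le1 -intr_norm ?ler1n ?(ler_int algC) ?ltr0n //  ?normr_gt0.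
    have P1 : P <= 1.
      apply: prodr_ile1 => s sin; rewrite normr_ge0 /=.
      apply: ltW; apply: (lt_le_trans (small s _)) => //.
      by rewrite in_cons sin orbT.
    rewrite hornerXsubC sub0r normrN.
    have s0s := small s0 (mem_head _ _).
    have apos : 0 < `|(lead_coef g)%:~R : algC| by rewrite normr_gt0.
    have Bab : `|lead_coef h|%:~R <= `|(lead_coef g)%:~R : algC| by rewrite -intr_norm ler_int.
    apply: (le_lt_trans (y := `|(lead_coef g)%:~R : algC| * `|s0|)).
      apply: (le_trans (y := `|lead_coef h|%:~R * `|s0|)).
        by apply: ler_wpM2l; [rewrite ler0z normr_ge0 | apply: ler_piMr].
      by apply: ler_wpM2r.
    apply: (lt_le_trans (y := `|(lead_coef g)%:~R : algC| * `|(lead_coef g)%:~R : algC|^-1)).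
      by rewrite ltr_pM2l.
    by rewrite mulfV ?lt0r_neq0.
  lia.
by move: g0; rewrite Eg coef0M h00 mul0r eqxx.
Qed.

Theorem lemma8 (m j : nat) (g : {poly int}) (rs : seq algC) :
  (1 <= m)%N -> size g = m.+1 -> g`_0 != 0 -> lead_coef g != 0 ->
  (j < m)%N ->
  map_poly (intr : int -> algC) g =
    (lead_coef g)%:~R *: \prod_(r <- rs) ('X - r%:P) ->
  count (fun r : algC => `|r| < `|(lead_coef g)%:~R : algC|^-1) rs = j ->
  count (fun r : algC => 1 < `|r|) rs = (m - j)%N ->
  forall (c : int) (gs : seq {poly int}),
    g = c%:P * \prod_(h <- gs) h ->
    (forall h, h \in gs -> (1 < size h)%N /\ irreducible_intpoly h) ->
    (size gs <= m - j)%N.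
Proof.
move=> m1 sg g0 an0 jm EgC cs cb c gs Eg Hgs.
have aCn0 : (lead_coef g)%:~R != 0 :> algC by rewrite intr_eq0.
have szrs : size rs = m.
  have : size (map_poly (intr : int -> algC) g) = size g
    by rewrite size_map_inj_poly //; exact: intr_inj.
  rewrite EgC size_scale // size_prod_XsubC sg; lia.
have ainv1 : `|(lead_coef g)%:~R : algC|^-1 <= 1.
  have age1 : 1 <= `|lead_coef g| by rewrite -gtz0_ge1 normr_gt0.
  rewrite invf_le1 ?normr_gt0 // -intr_norm.
  by rewrite -(ler_int algC) in age1.
have Hrs : forall r, r \in rs -> `|r| < `|(lead_coef g)%:~R : algC|^-1 \/ 1 < `|r|.
  have Hall : all (predU (fun r : algC => `|r| < `|(lead_coef g)%:~R : algC|^-1)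
                         (fun r : algC => 1 < `|r|)) rs.
    rewrite all_count; apply/eqP.
    have := count_predUI (fun r : algC => `|r| < `|(lead_coef g)%:~R : algC|^-1)
                         (fun r : algC => 1 < `|r|) rs.
    rewrite cs cb (@eq_count _ (predI _ _) pred0) ?count_pred0; first by lia.
    move=> r /=; apply/negbTE/negP => /andP [H1 H2].
    by have := lt_trans (lt_le_trans H1 ainv1) H2; rewrite ltxx.
  by move=> r /(allP Hall) /orP.
rewrite -cb -(size_map (map_poly (intr : int -> algC))).
apply: (@count_roots algC).
  move=> qC /mapP [h hin ->].
  apply: (@factor_big g h (c%:P * \prod_(h' <- rem h gs) h') rs) => //.
  - by rewrite Eg (big_rem _ hin) /= mulrCA.
  - by case: (Hgs h hin).
rewrite big_map -rmorph_prod.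
rewrite -(eqp_dvdr _ (eqp_scale _ aCn0)) -EgC Eg rmorphM.
exact: dvdp_mull.
Qed.
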